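(* Let $G_m$ be a parametric regulatory network, $R$ a well-formed set of influence constraints, and $T\subseteq\Delta(G_m)$ such that $p_R(T)\neq\emptyset$; let $L,U$ be the componentwise minimum and maximum of $p_R(T)$. For $v\in V$, $\omega\in\Omega_v$ and $\mathcal O\subseteq\Omega_v\times D_v$ define $l_{v,\omega}(\mathcal O)=\max(\{k\mid(\omega',k)\in\mathcal O,\ \omega'\prec_v\omega\}\cup\{L_{v,\omega}\})$ and $u_{v,\omega}(\mathcal O)=\min(\{k\mid(\omega',k)\in\mathcal O,\ \omega'\succ_v\omega\}\cup\{U_{v,\omega}\})$. Then for every $v\in V$, every pair of distinct $\omega,\omega'\in\Omega_v$, every $y\in\{L_{v,\omega},\dots,U_{v,\omega}\}$ and every $z\in\{l_{v,\omega'}(\{(\omega,y)\}),\dots,u_{v,\omega'}(\{(\omega,y)\})\}$: if there exists $\omega''\in\Omega_v\setminus\{\omega,\omega'\}$ with $l_{v,\omega''}(\{(\omega,y),(\omega',z)\})<u_{v,\omega''}(\{(\omega,y),(\omega',z)\})$, then there exists $P\in p_R(T)$ with $P_{v,\omega}=y$ and $P_{v,\omega'}=z$.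
   Context: An influence graph is $G=(V,I)$, $V=\{1,\dots,n\}$, $I\subseteq V\times V$; regulators $n^-(v)=\{u\mid(u,v)\in I\}$. $m\in\mathbb N^n$, $D_v=\{0,\dots,m_v\}$, PRN $G_m=(G,m)$. Regulator states $\Omega_v=\prod_{u\in n^-(v)}D_u$; $\omega[u\leftarrow k]$ replaces component $u$ of $\omega$ by $k$. Parametrisations: vectors $P\in\mathbb P(G_m)$ with coordinates $P_{v,\omega}\in D_v$ for $v\in V$, $\omega\in\Omega_v$, ordered componentwise. States $\prod_vD_v$; $\omega_v(x)$ projects a state $x$ onto the regulators of $v$. Transitions $\Delta(G_m)$: $x\xrightarrow{v,+}y$ ($y$ equals $x$ except $y_v=x_v+1\le m_v$) and $x\xrightarrow{v,-}y$ ($y_v=x_v-1\ge0$). $\mathcal P_{x\xrightarrow{v,+}y}=\{P\mid P_{v,\omega_v(x)}\ge x_v+1\}$, $\mathcal P_{x\xrightarrow{v,-}y}=\{P\mid P_{v,\omega_v(x)}\le x_v-1\}$; $p(\emptyset)=\mathbb P(G_m)$, $p(T)=\bigcap_{t\in T}\mathcal P_t$. $R\subseteq V\times V\times\{+1,-1,\mathrm o\}$ is well-formed if $u\in n^-(v)$ for all $(u,v,c)\in R$ and never both $(u,v,+1),(u,v,-1)\in R$. $\mathcal P_{(u,v,+1)}=\{P\mid\forall\omega\in\Omega_v\forall x_u\in\{1..m_u\}:P_{v,\omega[u\leftarrow x_u]}\ge P_{v,\omega[u\leftarrow x_u-1]}\}$, $\mathcal P_{(u,v,-1)}$ likewise with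 $\le$, $\mathcal P_{(u,v,\mathrm o)}=\{P\mid\exists\omega\in\Omega_v\exists x_u\in\{1..m_u\}:P_{v,\omega[u\leftarrow x_u]}\ne P_{v,\omega[u\leftarrow x_u-1]}\}$; $p_R(T)=p(T)\cap\bigcap_{r\in R}\mathcal P_r$. Order $\preceq_v$: $\omega\preceq_v\omega'$ iff for all $u\in n^-(v)$, $\omega_u\le\omega'_u$ if $(u,v,+1)\in R$, $\omega_u\ge\omega'_u$ if $(u,v,-1)\in R$, $\omega_u=\omega'_u$ otherwise; $\prec_v,\succ_v$ are the strict versions and their converses. *)

(* Defs.v *)
From mathcomp Require Import all_boot.
Set Implicit Arguments. Unset Strict Implicit. Unset Printing Implicit Defensive.

(* Vertices V = {1..n} are encoded as 'I_n.  The influence graph is a relation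
   I : rel 'I_n, (u,v) \in I  <->  I u v.  Maximal levels m : 'I_n -> nat,
   D_v = {0..m v}. *)

(* A regulator state omega \in Omega_v is encoded canonically as a finite
   function 'I_n -> nat which is 0 outside n^-(v) and bounded by m on n^-(v). *)
Definition vec n := {ffun 'I_n -> nat}.

Definition in_Omega n (I : rel 'I_n) (m : 'I_n -> nat) (v : 'I_n) (w : vec n) :=
  forall u, (I u v -> w u <= m u) /\ (~~ I u v -> w u = 0).

Definition upd n (w : vec n) (u : 'I_n) (k : nat) : vec n :=
  [ffun x => if x == u then k else w x].

Definition is_state n (m : 'I_n -> nat) (x : vec n) := forall u, x u <= m u.

Definition proj n (I : rel 'I_n) (v : 'I_n) (x : vec n) : vec n :=
  [ffun u => if I u v then x u else 0].

(* Parametrisations: P v omega = P_{v,omega} (only values on Omega_v matter). *)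
Definition param n := 'I_n -> vec n -> nat.

Definition in_PG n (I : rel 'I_n) (m : 'I_n -> nat) (P : param n) :=
  forall v w, in_Omega I m v w -> P v w <= m v.

(* Transitions: (x, v, true) is x -(v,+)-> y, (x, v, false) is x -(v,-)-> y. *)
Definition trans n := (vec n * 'I_n * bool)%type.

Definition in_Delta n (m : 'I_n -> nat) (t : trans n) :=
  let: (x, v, b) := t in
  is_state m x /\ (if b then x v + 1 <= m v else 1 <= x v).

Definition in_Ptrans n (I : rel 'I_n) (P : param n) (t : trans n) :=
  let: (x, v, b) := t in
  if b then x v + 1 <= P v (proj I v x) else P v (proj I v x) + 1 <= x v.

Inductive sign := Pos | Neg | Obs.

Definition well_formed n (I : rel 'I_n) (R : pred ('I_n * 'I_n * sign)) :=
  (forall u v c, R (u, v, c) -> I u v) /\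
  (forall u v, ~ (R (u, v, Pos) /\ R (u, v, Neg))).

Definition in_Pconstr n (I : rel 'I_n) (m : 'I_n -> nat) (P : param n)
    (r : 'I_n * 'I_n * sign) :=
  let: (u, v, c) := r in
  match c with
  | Pos => forall w, in_Omega I m v w -> forall k, 1 <= k <= m u ->
             P v (upd w u k) >= P v (upd w u k.-1)
  | Neg => forall w, in_Omega I m v w -> forall k, 1 <= k <= m u ->
             P v (upd w u k) <= P v (upd w u k.-1)
  | Obs => exists w, in_Omega I m v w /\ exists k, 1 <= k <= m u /\
             P v (upd w u k) <> P v (upd w u k.-1)
  end.

Definition in_pR n (I : rel 'I_n) (m : 'I_n -> nat) (R : pred ('I_n * 'I_n * sign))
    (T : trans n -> Prop) (P : param n) :=
  in_PG I m P /\ (forall t, T t -> in_Ptrans I P t) /\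
  (forall r, R r -> in_Pconstr I m P r).

Definition is_cw_min n (I : rel 'I_n) (m : 'I_n -> nat) (S : param n -> Prop)
    (L : param n) :=
  forall v w, in_Omega I m v w ->
    (forall P, S P -> L v w <= P v w) /\ (exists P, S P /\ P v w = L v w).

Definition is_cw_max n (I : rel 'I_n) (m : 'I_n -> nat) (S : param n -> Prop)
    (U : param n) :=
  forall v w, in_Omega I m v w ->
    (forall P, S P -> P v w <= U v w) /\ (exists P, S P /\ P v w = U v w).

Definition preceq n (I : rel 'I_n) (R : pred ('I_n * 'I_n * sign)) (v : 'I_n)
    (w w' : vec n) : bool :=
  [forall u : 'I_n, I u v ==>
     (if R (u, v, Pos) then w u <= w' u
      else if R (u, v, Neg) then w' u <= w u
      else w u == w' u)].

Definition prec n (I : rel 'I_n) (R : pred ('I_n * 'I_n * sign)) (v : 'I_n)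
    (w w' : vec n) : bool :=
  preceq I R v w w' && (w != w').

(* l_{v,omega}(O) and u_{v,omega}(O), for a finite set O given as a list *)
Definition lo n (I : rel 'I_n) (R : pred ('I_n * 'I_n * sign)) (L : param n)
    (v : 'I_n) (w : vec n) (O : seq (vec n * nat)) : nat :=
  foldr (fun p acc => if prec I R v p.1 w then maxn p.2 acc else acc) (L v w) O.

Definition up n (I : rel 'I_n) (R : pred ('I_n * 'I_n * sign)) (U : param n)
    (v : 'I_n) (w : vec n) (O : seq (vec n * nat)) : nat :=
  foldr (fun p acc => if prec I R v w p.1 then minn p.2 acc else acc) (U v w) O.

(* Main.v *)
Require Import Defs.
From mathcomp Require Import all_boot zify.
From Stdlib Require Import Classical.
Set Implicit Arguments. Unset Strict Implicit. Unset Printing Implicit Defensive.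

Lemma preceq_refl n (I : rel 'I_n) (R : pred ('I_n * 'I_n * sign)) v (w : vec n) : preceq I R v w w.
Proof. apply/forallP => u; apply/implyP => _; by do 2 case: ifP => _ //. Qed.

Lemma preceq_trans n (I : rel 'I_n) (R : pred ('I_n * 'I_n * sign)) v (a b c : vec n) :
  preceq I R v a b -> preceq I R v b c -> preceq I R v a c.
Proof.
move=> /forallP Hab /forallP Hbc; apply/forallP => u; apply/implyP => Iu.
move: (implyP (Hab u) Iu) (implyP (Hbc u) Iu).
case: ifP => _; first exact: leq_trans.
case: ifP => _; first by move=> h1 h2; exact: leq_trans h2 h1.
by move=> /eqP -> /eqP ->.
Qed.

Lemma preceq_antisym n (I : rel 'I_n) m (R : pred ('I_n * 'I_n * sign)) v (a b : vec n) :
  in_Omega I m v a -> in_Omega I m v b ->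
  preceq I R v a b -> preceq I R v b a -> a = b.
Proof.
move=> Ha Hb /forallP H1 /forallP H2; apply/ffunP => u.
case Iu: (I u v).
- move: (implyP (H1 u) Iu) (implyP (H2 u) Iu).
  case: ifP => _; first by move=> h1 h2; apply/eqP; rewrite eqn_leq h1 h2.
  case: ifP => _; first by move=> h1 h2; apply/eqP; rewrite eqn_leq h1 h2.
  by move=> /eqP.
- have := proj2 (Ha u); have := proj2 (Hb u); rewrite Iu => -> // -> //.
Qed.

Lemma upd_Omega n (I : rel 'I_n) m v (w : vec n) u j :
  in_Omega I m v w -> I u v -> j <= m u -> in_Omega I m v (upd w u j).
Proof.
move=> Hw Iu hj x; rewrite /upd ffunE; case: eqP => [->|_]; last exact: Hw.
by split=> //; rewrite Iu.
Qed.

Lemma upd_id n (w : vec n) u : upd w u (w u) = w.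
Proof. by apply/ffunP => x; rewrite /upd ffunE; case: eqP => [->|]. Qed.

Lemma upd_at n (w : vec n) u j : upd w u j u = j.
Proof. by rewrite /upd ffunE eqxx. Qed.

Lemma step_Pos n (I : rel 'I_n) (R : pred ('I_n * 'I_n * sign)) v (w : vec n) u k :
  R (u, v, Pos) -> preceq I R v (upd w u k.-1) (upd w u k).
Proof.
move=> HR; apply/forallP => x; apply/implyP => _; rewrite /upd !ffunE.
case: (eqVneq x u) => [->|_]; first by rewrite HR leq_pred.
by do 2 case: ifP => _ //.
Qed.

Lemma step_Neg n (I : rel 'I_n) (R : pred ('I_n * 'I_n * sign)) v (w : vec n) u k :
  well_formed I R -> R (u, v, Neg) -> preceq I R v (upd w u k) (upd w u k.-1).
Proof.
move=> WF HR; apply/forallP => x; apply/implyP => _; rewrite /upd !ffunE.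
case: (eqVneq x u) => [->|_].
  have HP : R (u, v, Pos) = false.
    by apply/negbTE/negP => hp; apply: (proj2 WF u v); split.
  by rewrite HP HR leq_pred.
by do 2 case: ifP => _ //.
Qed.

Lemma upd_neq n (w : vec n) u k : 1 <= k -> upd w u k.-1 != upd w u k.
Proof.
move=> hk; apply/negP => /eqP /(congr1 (fun f : vec n => f u)).
rewrite !upd_at; lia.
Qed.

Lemma inv_of_notobs n (I : rel 'I_n) m v u (Q : vec n -> nat) :
  I u v ->
  ~ (exists w, in_Omega I m v w /\ exists k, 1 <= k <= m u /\
        Q (upd w u k) <> Q (upd w u k.-1)) ->
  forall w, in_Omega I m v w -> forall j, j <= m u -> Q (upd w u j) = Q w.
Proof.
move=> Iu H w Ow.
have step : forall k, 1 <= k <= m u -> Q (upd w u k) = Q (upd w u k.-1).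
  move=> k hk; case: (eqVneq (Q (upd w u k)) (Q (upd w u k.-1))) => // ne.
  by exfalso; apply: H; exists w; split=> //; exists k; split=> //; apply/eqP.
have h0 : forall j, j <= m u -> Q (upd w u j) = Q (upd w u 0).
  elim => [//|j IH] hj.
  rewrite (step j.+1) /=; last by rewrite hj.
  by apply: IH; apply: ltnW.
move=> j hj; rewrite h0 //.
have -> : Q w = Q (upd w u (w u)) by rewrite upd_id.
by rewrite h0 //; apply: (proj1 (Ow u)).
Qed.

Lemma ifle (c c' : bool) k : (c -> c') -> (if c then k else 0) <= (if c' then k else 0).
Proof. by case: c; case: c' => // /(_ isT). Qed.

Lemma prec_of n (I : rel 'I_n) (R : pred ('I_n * 'I_n * sign)) v (a b : vec n) :
  preceq I R v a b -> a != b -> prec I R v a b.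
Proof. by rewrite /prec => -> ->. Qed.

Theorem theorem3 (n : nat) (I : rel 'I_n) (m : 'I_n -> nat)
    (R : pred ('I_n * 'I_n * sign)) (T : trans n -> Prop) (L U : param n) :
  well_formed I R ->
  (forall t, T t -> in_Delta m t) ->
  (exists P, in_pR I m R T P) ->
  is_cw_min I m (in_pR I m R T) L ->
  is_cw_max I m (in_pR I m R T) U ->
  forall (v : 'I_n) (w w' : vec n),
    in_Omega I m v w -> in_Omega I m v w' -> w != w' ->
  forall y, L v w <= y <= U v w ->
  forall z, lo I R L v w' [:: (w, y)] <= z <= up I R U v w' [:: (w, y)] ->
  (exists w'', [/\ in_Omega I m v w'', w'' != w, w'' != w' &
     lo I R L v w'' [:: (w, y); (w', z)] < up I R U v w'' [:: (w, y); (w', z)]]) ->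
  exists P, [/\ in_pR I m R T P, P v w = y & P v w' = z].
Proof.
Ltac cl := repeat match goal with H : _ |- _ => clear H end.
move=> WF HT [P0 HP0] HL HU v w w' Ow Ow' nww' y /andP[Ly yU] z /andP[lz zu]
  [w'' [Ow'' nw''w nw''w' hlu]].
set a := lo I R L v w'' [:: (w, y); (w', z)] in hlu.
set b := up I R U v w'' [:: (w, y); (w', z)] in hlu.
have nww'' : w != w'' by rewrite eq_sym.
have nw'w'' : w' != w'' by rewrite eq_sym.
have nw'w : w' != w by rewrite eq_sym.
have ha_L : L v w'' <= a.
  by rewrite /a /lo /=; do 2 case: ifP => _ /=; cl; lia.
have hb_U : b <= U v w''.
  by rewrite /b /up /=; do 2 case: ifP => _ /=; cl; lia.
have ha_y : prec I R v w w'' -> y <= a.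
  by rewrite /a /lo /= => ->; case: ifP => _ /=; cl; lia.
have ha_z : prec I R v w' w'' -> z <= a.
  by rewrite /a /lo /= => ->; case: ifP => _ /=; cl; lia.
have hb_y : prec I R v w'' w -> b <= y.
  by rewrite /b /up /= => ->; case: ifP => _ /=; cl; lia.
have hb_z : prec I R v w'' w' -> b <= z.
  by rewrite /b /up /= => ->; case: ifP => _ /=; cl; lia.
have hLz : L v w' <= z.
  by move: lz; rewrite /lo /=; case: ifP => _ /=; cl; lia.
have hyz : prec I R v w w' -> y <= z.
  by move=> h; move: lz; rewrite /lo /= h; cl; lia.
have hzU : z <= U v w'.
  by move: zu; rewrite /up /=; case: ifP => _ /=; cl; lia.
have hzy : prec I R v w' w -> z <= y.
  by move=> h; move: zu; rewrite /up /= h; cl; lia.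
have LU : forall om, in_Omega I m v om -> L v om <= U v om.
  move=> om Oom; have [_ [P1 [S1 e1]]] := HL v om Oom.
  by rewrite -e1; apply: (proj1 (HU v om Oom)).
have UM : forall om, in_Omega I m v om -> U v om <= m v.
  move=> om Oom; have [_ [P1 [S1 e1]]] := HU v om Oom.
  by rewrite -e1; apply: (proj1 S1).
have LUmono : forall o1 o2, in_Omega I m v o1 -> in_Omega I m v o2 ->
    (forall P, in_pR I m R T P -> P v o1 <= P v o2) ->
    L v o1 <= L v o2 /\ U v o1 <= U v o2.
  move=> o1 o2 O1 O2 H; split.
    have [_ [P2 [S2 e2]]] := HL v o2 O2.
    rewrite -e2; exact: leq_trans (proj1 (HL v o1 O1) _ S2) (H _ S2).
  have [_ [P1 [S1 e1]]] := HU v o1 O1.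
  rewrite -e1; exact: leq_trans (H _ S1) (proj1 (HU v o2 O2) _ S1).
pose base om := maxn (L v om) (maxn (if preceq I R v w om then y else 0)
   (maxn (if preceq I R v w' om then z else 0) (if prec I R v w'' om then a.+1 else 0))).
pose Q (e : nat) om := if om == w'' then e else minn (U v om) (base om).
pose PP (e : nat) : param n := fun v' om => if v' == v then Q e om else P0 v' om.
have eqPP : forall e om, PP e v om = Q e om by move=> e om; rewrite /PP eqxx.
have Qw : forall e, Q e w = y.
  move=> e; rewrite /Q (negbTE nww'') /base preceq_refl.
  have h1 : (if preceq I R v w' w then z else 0) <= y.
    case: ifP => h //; exact: hzy (prec_of h nw'w).
  have h2 : (if prec I R v w'' w then a.+1 else 0) <= y.
    case: ifP => h //; have := hb_y h; move: hlu; cl; lia.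
  move: h1 h2 Ly yU; cl; lia.
have Qw' : forall e, Q e w' = z.
  move=> e; rewrite /Q (negbTE nw'w'') /base preceq_refl.
  have h1 : (if preceq I R v w w' then y else 0) <= z.
    case: ifP => h //; exact: hyz (prec_of h nww').
  have h2 : (if prec I R v w'' w' then a.+1 else 0) <= z.
    case: ifP => h //; have := hb_z h; move: hlu; cl; lia.
  move: h1 h2 hLz hzU; cl; lia.
have bounds : forall e, a <= e <= a.+1 -> forall om, in_Omega I m v om ->
    L v om <= Q e om <= U v om.
  move=> e he om Oom; rewrite /Q; case: eqP => [->|_]; first by move: he ha_L hb_U hlu; cl; lia.
  have := LU om Oom; rewrite /base; cl; lia.
have mono : forall e, a <= e <= a.+1 -> forall o1 o2,
    in_Omega I m v o1 -> in_Omega I m v o2 -> o1 != o2 -> preceq I R v o1 o2 ->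
    L v o1 <= L v o2 -> U v o1 <= U v o2 -> Q e o1 <= Q e o2.
  move=> e he o1 o2 O1 O2 n12 p12 hL hU'.
  case: (eqVneq o1 w'') => [e1|ne1].
    subst o1.
    have n2 : o2 != w'' by rewrite eq_sym.
    have hp : prec I R v w'' o2 := prec_of p12 n12.
    rewrite /Q eqxx (negbTE n2) /base hp.
    by move: he hlu hb_U hU'; cl; lia.
  case: (eqVneq o2 w'') => [e2|ne2].
    subst o2.
    rewrite /Q eqxx (negbTE ne1).
    have h1 : (if preceq I R v w o1 then y else 0) <= a.
      case: ifP => h //; apply: ha_y; exact: prec_of (preceq_trans h p12) nww''.
    have h2 : (if preceq I R v w' o1 then z else 0) <= a.
      case: ifP => h //; apply: ha_z; exact: prec_of (preceq_trans h p12) nw'w''.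
    have h3 : prec I R v w'' o1 = false.
      apply/negbTE/negP => /andP [h _].
      by move/eqP: ne1; apply; apply: (preceq_antisym O1 Ow'' p12 h).
    rewrite /base h3; by move: h1 h2 hL ha_L he; cl; lia.
  rewrite /Q (negbTE ne1) (negbTE ne2).
  have h1 := ifle y (fun h : preceq I R v w o1 => preceq_trans h p12).
  have h2 := ifle z (fun h : preceq I R v w' o1 => preceq_trans h p12).
  have h3 : (if prec I R v w'' o1 then a.+1 else 0) <= (if prec I R v w'' o2 then a.+1 else 0).
    apply: ifle => /andP [h _]; apply: prec_of (preceq_trans h p12) _.
    by rewrite eq_sym.
  rewrite /base; by move: h1 h2 h3 hL hU'; cl; lia.
pose Good e := forall u, R (u, v, Obs) -> in_Pconstr I m (PP e) (u, v, Obs).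
have final : forall e, a <= e <= a.+1 -> Good e ->
    exists P, [/\ in_pR I m R T P, P v w = y & P v w' = z].
  move=> e he Ge; exists (PP e); split; last by rewrite eqPP Qw'.
    2: by rewrite eqPP Qw.
  split; [|split].
  - move=> v' om Oom; rewrite /PP; case: (eqVneq v' v) => [ev|ne].
      subst v'; have := bounds e he om Oom; have := UM om Oom; cl; lia.
    exact: (proj1 HP0 v' om Oom).
  - move=> [[x v'] bb] Tt.
    have D := HT _ Tt; have := proj1 (proj2 HP0) _ Tt.
    rewrite /in_Ptrans /PP; case: (eqVneq v' v) => [ev|ne] //; subst v' => _.
    have Ox : in_Omega I m v (proj I v x).
      move=> u; rewrite /proj ffunE; case: (I u v) => //; split=> // _.
      exact: (proj1 D u).
    have bo := bounds e he _ Ox.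
    case: bb Tt {D} => Tt.
      have [_ [Ps [Sps eqs]]] := HL v _ Ox.
      have := proj1 (proj2 Sps) _ Tt; rewrite /= eqs.
      by move: bo; cl; lia.
    have [_ [Ps [Sps eqs]]] := HU v _ Ox.
    have := proj1 (proj2 Sps) _ Tt; rewrite /= eqs.
    by move: bo; cl; lia.
  - move=> [[u v'] c] Rr.
    case: (eqVneq v' v) => [ev|ne]; last first.
      have := proj2 (proj2 HP0) _ Rr.
      by rewrite /in_Pconstr /PP (negbTE ne).
    subst v'.
    have Iu : I u v := proj1 WF _ _ _ Rr.
    case: c Rr => Rr /=; last exact: Ge.
    + move=> om Oom k hk; rewrite !eqPP.
      have hk1 : 1 <= k by case/andP: hk.
      have hkm : k <= m u by case/andP: hk.
      have O1 := upd_Omega Oom Iu (leq_trans (leq_pred k) hkm).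
      have O2 := upd_Omega Oom Iu hkm.
      have [hL' hU'] := LUmono _ _ O1 O2
        (fun P SP => proj2 (proj2 SP) _ Rr om Oom k hk).
      apply: (mono e he) => //; [exact: upd_neq | exact: step_Pos].
    + move=> om Oom k hk; rewrite !eqPP.
      have hk1 : 1 <= k by case/andP: hk.
      have hkm : k <= m u by case/andP: hk.
      have O1 := upd_Omega Oom Iu (leq_trans (leq_pred k) hkm).
      have O2 := upd_Omega Oom Iu hkm.
      have [hL' hU'] := LUmono _ _ O2 O1
        (fun P SP => proj2 (proj2 SP) _ Rr om Oom k hk).
      have n21 : upd om u k != upd om u k.-1 by rewrite eq_sym upd_neq.
      apply: (mono e he) => //; exact: step_Neg.
have Qsame : forall om, om != w'' -> Q a om = Q a.+1 om.
  by move=> om h; rewrite /Q (negbTE h).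
have Qw'' : forall e, Q e w'' = e by move=> e; rewrite /Q eqxx.
have mpos : forall u, R (u, v, Obs) -> 0 < m u.
  move=> u Ru; have [_ [_ [k [hk _]]]] := proj2 (proj2 HP0) _ Ru.
  by case/andP: hk => h1 h2; apply: leq_trans h1 h2.
have jfacts : forall u, R (u, v, Obs) ->
    (if w'' u == 0 then 1 else 0) <= m u /\ (if w'' u == 0 then 1 else 0) != w'' u.
  move=> u Ru; have := mpos u Ru; case: eqP => [->|/eqP h] //.
  by move=> _; split=> //; rewrite eq_sym.
have choice : Good a \/ Good a.+1.
  case: (classic (Good a)) => ga; [by left | right].
  have [u1 nu1] := not_all_ex_not _ _ ga.
  have [R1 nc1] := imply_to_and _ _ nu1.
  move=> u2 R2; apply: NNPP => nc2.
  have I1 : I u1 v := proj1 WF _ _ _ R1.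
  have I2 : I u2 v := proj1 WF _ _ _ R2.
  have inv1 := inv_of_notobs (Q := PP a v) I1 nc1.
  have inv2 := inv_of_notobs (Q := PP a.+1 v) I2 nc2.
  have [hj1 hn1] := jfacts u1 R1.
  have [hj2 hn2] := jfacts u2 R2.
  pose j1 := if w'' u1 == 0 then 1 else 0.
  pose j2 := if w'' u2 == 0 then 1 else 0.
  pose r := upd w'' u1 j1.
  pose s := upd w'' u2 j2.
  pose r' := upd r u2 j2.
  have comm : upd s u1 j1 = r'.
    apply/ffunP => x; rewrite /r' /r /s /upd !ffunE.
    case: (eqVneq x u1) => [->|n1] //.
    case: (eqVneq u1 u2) => [e|] //.
    by rewrite /j1 /j2 e.
  have Or : in_Omega I m v r := upd_Omega Ow'' I1 hj1.
  have Os : in_Omega I m v s := upd_Omega Ow'' I2 hj2.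
  have nr : r != w''.
    apply/negP => /eqP /(congr1 (fun f : vec n => f u1)); rewrite /r upd_at.
    by move=> h; move: hn1; rewrite -/j1 h eqxx.
  have ns : s != w''.
    apply/negP => /eqP /(congr1 (fun f : vec n => f u2)); rewrite /s upd_at.
    by move=> h; move: hn2; rewrite -/j2 h eqxx.
  have nr' : r' != w''.
    apply/negP => /eqP /(congr1 (fun f : vec n => f u2)); rewrite /r' upd_at.
    by move=> h; move: hn2; rewrite -/j2 h eqxx.
  have e1 := inv1 w'' Ow'' j1 hj1.
  have e2 := inv1 s Os j1 hj1.
  have e3 := inv2 w'' Ow'' j2 hj2.
  have e4 := inv2 r Or j2 hj2.
  rewrite comm !eqPP in e1 e2 e3 e4.
  rewrite -/r -/s -/r' in e1 e2 e3 e4.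
  rewrite Qw'' in e1; rewrite Qw'' in e3.
  have : a = a.+1.
    by rewrite -{1}e1 Qsame // -e4 -Qsame // e2 Qsame // e3.
  by move=> h; have := ltnSn a; rewrite -{2}h ltnn.
have hab : a <= a <= a.+1 by rewrite leqnn leqnSn.
have hab' : a <= a.+1 <= a.+1 by rewrite leqnn leqnSn.
by case: choice => [g|g]; [exact: final _ hab g | exact: final _ hab' g].
Qed.
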